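(* Let $G=(V,E)$ be a hypergraph and let $(X_1,\dots,X_p,W_0,Z_0)$ be a partition of $V$ for some integer $p\ge1$. Let $Q\subset V$ be a set such that \[Y_i:=X_i\setminus Q\neq\emptyset\ \ \forall i\in[p],\quad Y_{p+1}:=Q\cap Z_0\neq\emptyset,\quad Z:=Z_0\setminus Q\neq\emptyset,\quad W:=W_0\cup(Q\setminus Z_0)\neq\emptyset.\] Then $(Y_1,\dots,Y_p,Y_{p+1},W,Z)$ is a partition of $V$ and \[\sigma(Y_1,\dots,Y_{p+1},W,Z)\le\sigma(X_1,\dots,X_p,W_0,Z_0)+d(Q)-d(W_0\cap Q).\]
   Context: A hypergraph $G=(V,E)$ has finite vertex set $V$ and finite multiset $E$ of hyperedges (subsets of $V$). For $X\subseteq V$, $d(X)$ is the number of hyperedges meeting both $X$ and $V\setminus X$. For a partition $(Y_1,\dots,Y_m,W,Z)$ of $V$: $\mathrm{cost}(Y_1,\dots,Y_m,W,Z)$ is the number of hyperedges meeting at least two of its parts; $\mathrm{cost}(W,Z)$ is the number of hyperedges $e\subseteq W\cup Z$ meeting both $W$ and $Z$; $\alpha(Y_1,\dots,Y_m,W,Z)$ is the number of hyperedges meeting $Z$ and at least two of $Y_1,\dots,Y_m,W$; $\beta(Y_1,\dots,Y_m,Z)$ is the number of hyperedges disjoint from $Z$ meeting at least two of $Y_1,\dots,Y_m$; and $\sigma(Y_1,\dots,Y_m,W,Z):=\mathrm{cost}(Y_1,\dots,Y_m,W,Z)+\mathrm{cost}(W,Z)+\alpha(Y_1,\dots,Y_m,W,Z)+\beta(Y_1,\dots,Y_m,Z)$.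 *)

(* Defs.v *)
From mathcomp Require Import all_boot all_order all_algebra.
Set Implicit Arguments. Unset Strict Implicit. Unset Printing Implicit Defensive.

(* A hypergraph on a finite vertex type V: the vertex set is [set: V],
   the hyperedges form a multiset, represented as a list E : seq {set V}. *)

Section Hyper.
Variable V : finType.

Definition meets (e A : {set V}) : bool := e :&: A != set0.

Definition dcut (E : seq {set V}) (X : {set V}) : nat :=
  count (fun e : {set V} => meets e X && meets e (~: X)) E.

(* (P_i)_{i<k} together with the extra parts is a partition of V:
   parts pairwise disjoint and covering V (parts may a priori be empty). *)
Definition is_partition k (P : 'I_k -> {set V}) (W Z : {set V}) : Prop :=
  [/\ forall i j, i != j -> [disjoint P i & P j],
      forall i, [disjoint P i & W],
      forall i, [disjoint P i & Z],
      [disjoint W & Z] &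
      (\bigcup_(i < k) P i) :|: W :|: Z = [set: V]].

Definition nmeet m (e : {set V}) (Y : 'I_m -> {set V}) : nat :=
  #|[set i : 'I_m | meets e (Y i)]|.

Definition cost_all (E : seq {set V}) m (Y : 'I_m -> {set V}) (W Z : {set V}) :=
  count (fun e : {set V} => 2 <= nmeet e Y + meets e W + meets e Z) E.

Definition cost_WZ (E : seq {set V}) (W Z : {set V}) :=
  count (fun e : {set V} => [&& e \subset W :|: Z, meets e W & meets e Z]) E.

Definition alpha (E : seq {set V}) m (Y : 'I_m -> {set V}) (W Z : {set V}) :=
  count (fun e : {set V} => meets e Z && (2 <= nmeet e Y + meets e W)) E.

Definition beta (E : seq {set V}) m (Y : 'I_m -> {set V}) (Z : {set V}) :=
  count (fun e : {set V} => ~~ meets e Z && (2 <= nmeet e Y)) E.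

Definition sigma (E : seq {set V}) m (Y : 'I_m -> {set V}) (W Z : {set V}) : nat :=
  cost_all E Y W Z + cost_WZ E W Z + alpha E Y W Z + beta E Y Z.

End Hyper.

(* Y_i := X_i \ Q for i < p, Y_{p+1} := Q ∩ Z0 (index p, 0-based) *)
Definition newY (V : finType) p (X : 'I_p -> {set V}) (Q Z0 : {set V})
  (i : 'I_p.+1) : {set V} :=
  oapp (fun j : 'I_p => X j :\: Q) (Q :&: Z0) (insub (val i)).

(* Main.v *)
Require Import Defs.
From mathcomp Require Import all_boot all_order all_algebra.
From mathcomp Require Import zify.
Import Order.TTheory GRing.Theory Num.Theory.

Definition vcost (ny : nat) (mW mZ S : bool) : nat :=
  (2 <= ny + mW + mZ) + [&& S, mW & mZ] + (mZ && (2 <= ny + mW)) + (~~ mZ && (2 <= ny)).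

Lemma edge_ineq (a b : nat) (c wq wn zq zn oS nW nS dQ dWQ : bool) :
 b <= a -> (b < a -> c) -> (c -> 0 < a) -> ((a == 0) -> oS) -> (nW -> [|| wq, wn | c]) ->
 (nS -> (b == 0) && ~~ zq) -> ([|| c, wq | zq] -> [|| 0 < b, wn | zn] -> dQ) ->
 (dWQ -> wq && [|| 0 < a, wn, zq | zn]) ->
 vcost (b + zq) nW zn nS + dWQ <= vcost a (wq||wn) (zq||zn) oS + dQ.
Proof.
rewrite /vcost.
case: c; case: wq; case: wn; case: zq; case: zn; case: oS; case: nW; case: nS; case: dQ; case: dWQ => /=; lia.
Qed.

Section S.
Variable V : finType.

Lemma meetsP (e A : {set V}) : reflect (exists2 v, v \in e & v \in A) (meets e A).
Proof.
rewrite /meets; apply: (iffP (set0Pn (e :&: A))) => [[v]|[v ve va]].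
  by rewrite inE => /andP[]; exists v.
by exists v; rewrite inE ve va.
Qed.

Lemma card_sum n (P : 'I_n -> bool) : #|[set i | P i]| = \sum_(i < n) P i.
Proof.
rewrite -sum1_card big_mkcond /=; apply: eq_bigr => i _; rewrite inE; by case: (P i).
Qed.

Lemma newY_lt p (X : 'I_p -> {set V}) Q Z0 (i : 'I_p) :
  newY X Q Z0 (widen_ord (leqnSn p) i) = X i :\: Q.
Proof.
rewrite /newY /=; case: insubP => [j _ Hj|]; last by rewrite /= ltn_ord.
by congr (_ :\: _); congr X; apply: val_inj.
Qed.

Lemma newY_max p (X : 'I_p -> {set V}) Q Z0 :
  newY X Q Z0 ord_max = Q :&: Z0.
Proof.
rewrite /newY /=; case: insubP => [j Hj _|] //; by rewrite /= ltnn in Hj.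
Qed.

Lemma nmeet_new p (X : 'I_p -> {set V}) Q Z0 e :
  nmeet e (newY X Q Z0) = #|[set j : 'I_p | meets e (X j :\: Q)]| + meets e (Q :&: Z0).
Proof.
rewrite /nmeet !card_sum big_ord_recr /= newY_max; congr (_ + _).
by apply: eq_bigr => i _; rewrite newY_lt.
Qed.


Lemma disjP (A B : {set V}) : (forall v, v \in A -> v \in B -> False) -> [disjoint A & B].
Proof.
move=> H; rewrite -setI_eq0; apply/eqP/setP => v; rewrite !inE.
by apply/negbTE/negP => /andP[]; exact: H.
Qed.

Lemma coverP p (X : 'I_p -> {set V}) W0 Z0 v :
  is_partition X W0 Z0 -> [\/ exists i, v \in X i, v \in W0 | v \in Z0].
Proof.
case=> _ _ _ _ cov.
have : v \in [set: V] by rewrite inE.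
rewrite -cov !inE => /orP[/orP[/bigcupP[i _ h]|h]|h].
- by apply: Or31; exists i.
- exact: Or32.
- exact: Or33.
Qed.

Lemma edge_main p (X : 'I_p -> {set V}) W0 Z0 Q e :
  is_partition X W0 Z0 ->
  vcost (nmeet e (newY X Q Z0)) (meets e (W0 :|: (Q :\: Z0))) (meets e (Z0 :\: Q))
      (e \subset (W0 :|: (Q :\: Z0)) :|: (Z0 :\: Q))
  + (meets e (W0 :&: Q) && meets e (~: (W0 :&: Q)))
  <= vcost (nmeet e X) (meets e W0) (meets e Z0) (e \subset W0 :|: Z0)
  + (meets e Q && meets e (~: Q)).
Proof.
move=> HP; have covP := fun v => @coverP p X W0 Z0 v HP.
case: HP => dXX dXW dXZ dWZ _.
have oW : meets e W0 = meets e (W0 :&: Q) || meets e (W0 :\: Q).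
  apply/meetsP/orP => [[v ve vW]|[]/meetsP[v ve]]; rewrite ?inE.
  - by case vQ: (v \in Q); [left|right]; apply/meetsP; exists v; rewrite // !inE vQ vW.
  - by case/andP => vW _; exists v.
  - by case/andP => _ vW; exists v.
have oZ : meets e Z0 = meets e (Q :&: Z0) || meets e (Z0 :\: Q).
  apply/meetsP/orP => [[v ve vZ]|[]/meetsP[v ve]]; rewrite ?inE.
  - by case vQ: (v \in Q); [left|right]; apply/meetsP; exists v; rewrite // !inE vQ vZ.
  - by case/andP => _ vZ; exists v.
  - by case/andP => _ vZ; exists v.
rewrite nmeet_new oW oZ.
apply: (@edge_ineq _ _ (meets e (Q :\: Z0 :\: W0))).
- rewrite /nmeet; apply: subset_leq_card; apply/subsetP => j; rewrite !inE.
  move=> /meetsP[v ve]; rewrite inE => /andP[_ vx]; apply/meetsP; exists v => //.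
- apply: contraTT => nc; rewrite -leqNgt /nmeet; apply: subset_leq_card.
  apply/subsetP => j; rewrite !inE => /meetsP[v ve vx].
  case vQ: (v \in Q).
    exfalso; apply: (negP nc); apply/meetsP; exists v => //.
    by rewrite !inE vQ (disjointFr (dXZ j) vx) (disjointFr (dXW j) vx).
  by apply/meetsP; exists v; rewrite // !inE vQ vx.
- move=> /meetsP[v ve]; rewrite !inE => /and3P[vW vZ vQ].
  case: (covP v) => [[i vi]|h|h].
  + rewrite /nmeet card_gt0; apply/set0Pn; exists i; rewrite inE.
    by apply/meetsP; exists v.
  + by rewrite h in vW.
  + by rewrite h in vZ.
- rewrite /nmeet cards_eq0 => /eqP S0; apply/subsetP => v ve.
  case: (covP v) => [[i vi]|h|h]; last 2 first.
  + by rewrite !inE h.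
  + by rewrite !inE h orbT.
  have : i \in [set j | meets e (X j)] by rewrite inE; apply/meetsP; exists v.
  by rewrite S0 inE.
- move=> /meetsP[v ve]; rewrite !inE => /orP[vW|/andP[vZ vQ]].
    case vQ: (v \in Q).
      by apply/orP; left; apply/meetsP; exists v; rewrite // !inE vQ vW.
    by apply/or3P; apply: Or32; apply/meetsP; exists v; rewrite // !inE vQ vW.
  case vW: (v \in W0).
    by apply/orP; left; apply/meetsP; exists v; rewrite // !inE vQ vW.
  by apply/or3P; apply: Or33; apply/meetsP; exists v; rewrite // !inE vQ vW vZ.
- move=> sub; apply/andP; split.
    rewrite cards_eq0; apply/eqP/setP => j; rewrite !inE.
    apply/negbTE/meetsP => [[v ve]]; rewrite !inE => /andP[vQ vX].
    have := subsetP sub v ve.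
    by rewrite !inE (negbTE vQ) (disjointFr (dXW j) vX) (disjointFr (dXZ j) vX).
  apply/meetsP => [[v ve]]; rewrite !inE => /andP[vQ vZ].
  have := subsetP sub v ve.
  by rewrite !inE vQ vZ (disjointFl dWZ vZ).
- move=> h1 h2; apply/andP; split.
    case/or3P: h1 => /meetsP[v ve]; rewrite !inE => h; apply/meetsP; exists v => //.
    + by case/and3P: h.
    + by case/andP: h.
    + by case/andP: h.
  case/or3P: h2.
  + rewrite card_gt0 => /set0Pn[j]; rewrite inE => /meetsP[v ve].
    by rewrite inE => /andP[vQ _]; apply/meetsP; exists v; rewrite // inE.
  + by move=> /meetsP[v ve]; rewrite !inE => /andP[vQ _]; apply/meetsP; exists v; rewrite // inE.
  + by move=> /meetsP[v ve]; rewrite !inE => /andP[vQ _]; apply/meetsP; exists v; rewrite // inE.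
- case/andP => h1 h2; rewrite h1 /=.
  move/meetsP: h2 => [v ve]; rewrite !inE negb_and => nv.
  case: (covP v) => [[i vi]|h|h].
  + apply/orP; left; rewrite /nmeet card_gt0; apply/set0Pn; exists i; rewrite inE.
    by apply/meetsP; exists v.
  + by rewrite h /= in nv; apply/or4P; apply: Or42; apply/meetsP; exists v; rewrite // !inE nv h.
  + case vQ: (v \in Q).
      by apply/or4P; apply: Or43; apply/meetsP; exists v; rewrite // !inE vQ h.
    by apply/or4P; apply: Or44; apply/meetsP; exists v; rewrite // !inE vQ h.
Qed.


Lemma sum_ineq p (X : 'I_p -> {set V}) W0 Z0 Q (E : seq {set V}) :
  is_partition X W0 Z0 ->
  sigma E (newY X Q Z0) (W0 :|: (Q :\: Z0)) (Z0 :\: Q) + dcut E (W0 :&: Q)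
  <= sigma E X W0 Z0 + dcut E Q.
Proof.
move=> HP; elim: E => [|e E IH] //=.
have := @edge_main p X W0 Z0 Q e HP.
move: IH; rewrite /sigma /cost_all /cost_WZ /alpha /beta /dcut /vcost /=.
lia.
Qed.

Lemma newY_case p (X : 'I_p -> {set V}) Q Z0 (i : 'I_p.+1) :
  (exists2 j : 'I_p, val i = val j & newY X Q Z0 i = X j :\: Q)
  \/ (val i = p /\ newY X Q Z0 i = Q :&: Z0).
Proof.
rewrite /newY; case: insubP => [j _ Hj|Hn] /=.
  by left; exists j.
right; split=> //; move: Hn (ltn_ord i); rewrite -leqNgt ltnS => h1 h2.
by apply/eqP; rewrite eqn_leq h1 h2.
Qed.

Lemma part_new p (X : 'I_p -> {set V}) W0 Z0 Q :
  is_partition X W0 Z0 ->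
  is_partition (newY X Q Z0) (W0 :|: (Q :\: Z0)) (Z0 :\: Q).
Proof.
move=> HP; have covP := fun v => @coverP p X W0 Z0 v HP.
case: HP => dXX dXW dXZ dWZ _; split.
- move=> i j ij; apply: disjP => v.
  case: (@newY_case p X Q Z0 i) => [[i' ei ->]|[ei ->]];
  case: (@newY_case p X Q Z0 j) => [[j' ej ->]|[ej ->]]; rewrite !inE.
  + move=> /andP[_ vi] /andP[_ vj].
    have ne : i' != j'.
      apply/eqP => E; move: ij; rewrite -(inj_eq val_inj) ei ej E eqxx //.
    by rewrite (disjointFr (dXX _ _ ne) vi) in vj.
  + by move=> /andP[/negP vQ _] /andP[].
  + by move=> /andP[vQ _] /andP[/negP].
  + by move: ij; rewrite -(inj_eq val_inj) ei ej eqxx.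
- move=> i; apply: disjP => v.
  case: (@newY_case p X Q Z0 i) => [[i' ei ->]|[ei ->]]; rewrite !inE.
  + move=> /andP[vQ vi]; rewrite (disjointFr (dXW i') vi) /=.
    by rewrite (negbTE vQ) andbF.
  + by move=> /andP[vQ vZ]; rewrite (disjointFl dWZ vZ) vZ.
- move=> i; apply: disjP => v.
  case: (@newY_case p X Q Z0 i) => [[i' ei ->]|[ei ->]]; rewrite !inE.
  + by move=> /andP[vQ vi]; rewrite (disjointFr (dXZ i') vi) andbF.
  + by move=> /andP[-> _].
- apply: disjP => v; rewrite !inE => /orP[vW|/andP[vZ _]] /andP[_ vZ'].
  + by rewrite (disjointFr dWZ vW) in vZ'.
  + by rewrite vZ' in vZ.
- apply/setP => v; rewrite !inE; case: (covP v) => [[i vi]|h|h].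
  + case vQ: (v \in Q).
      by rewrite (disjointFr (dXZ i) vi) !orbT.
    apply/orP; left; apply/orP; left; apply/bigcupP.
    by exists (widen_ord (leqnSn p) i) => //; rewrite newY_lt !inE vQ vi.
  + by rewrite h /= orbT.
  + case vQ: (v \in Q); last by rewrite h orbT.
    apply/orP; left; apply/orP; left; apply/bigcupP.
    by exists ord_max => //; rewrite newY_max !inE vQ h.
Qed.

End S.

Local Open Scope ring_scope.

Theorem lemma3p3 (V : finType) (E : seq {set V}) (p : nat)
  (X : 'I_p -> {set V}) (W0 Z0 Q : {set V}) :
  (1 <= p)%N ->
  is_partition X W0 Z0 ->
  (forall i : 'I_p, X i :\: Q != set0) ->
  Q :&: Z0 != set0 ->
  Z0 :\: Q != set0 ->
  W0 :|: (Q :\: Z0) != set0 ->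
  is_partition (newY X Q Z0) (W0 :|: (Q :\: Z0)) (Z0 :\: Q) /\
  ((sigma E (newY X Q Z0) (W0 :|: (Q :\: Z0)) (Z0 :\: Q))%:Z
     <= (sigma E X W0 Z0)%:Z + (dcut E Q)%:Z - (dcut E (W0 :&: Q))%:Z).
Proof.
move=> _ HP _ _ _ _; split; first exact: part_new.
have := @sum_ineq V p X W0 Z0 Q E HP; lia.
Qed.
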